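(* Let $\mathbb{H}$ be a finite-dimensional complex Hilbert space and let $t\mapsto H(t)$ be a continuous family of self-adjoint operators on $\mathbb{H}$, with propagator $\{U(t,s)\}_{t,s\in\mathbb{R}}$ (unitaries with $U(t,t)=I$, $U(t,r)U(r,s)=U(t,s)$ and $\mathrm{i}\frac{d}{dt}U(t,s)=H(t)U(t,s)$). Let $X_0=\sum_{j=1}^n\lambda_jE_j$ be a self-adjoint operator with distinct eigenvalues $\lambda_1,\dots,\lambda_n$ and spectral projections $E_j$, and suppose there is $T>0$ with $U(0,T)E_jU(T,0)=E_j$ for all $1\le j\le n$. Fix $j$, let $d_j=\dim E_j[\mathbb{H}]$, let $\{\psi^{(j)}_k:1\le k\le d_j\}$ be an orthonormal basis of $E_j[\mathbb{H}]$, and set $\psi^{(j)}_k(t)=U(0,t)\psi^{(j)}_k$. Let $C_j(t)=[c^{(j)}_{mk}(t)]_{m,k=1}^{d_j}$ with $c^{(j)}_{mk}(t)=\langle\psi^{(j)}_m,H(t)\psi^{(j)}_k\rangle$, let $\tilde V_j(t)=[\tilde v^{(j)}_{mk}(t)]$ be the solution of $\mathrm{i}\frac{d}{dt}\tilde V_j(t)=C_j(t)\tilde V_j(t)$ with $\tilde V_j(0)=I_{d_j}$, and define $\tilde\psi^{(j)}_k(t)=\sum_{m=1}^{d_j}\tilde v^{(j)}_{mk}(t)\psi^{(j)}_m(t)$. Then for all $t$ and all $1\le m,k\le d_j$, $$\Big\langle \tilde\psi^{(j)}_m(t),\frac{d}{dt}\tilde\psi^{(j)}_k(t)\Big\rangle=0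 .$$
   Context: Inner products are linear in the second argument. $U(0,t)=U(t,0)^{-1}$. The matrices $C_j(t)$ are Hermitian, so $\tilde V_j(t)$ is unitary and $\{\tilde\psi^{(j)}_k(t)\}_k$ is an orthonormal basis of $U(0,t)E_jU(t,0)[\mathbb{H}]$. *)

(* Defs.v *)
From HB Require Import structures.
From mathcomp Require Import all_boot all_order all_algebra.
From mathcomp Require Import all_classical all_reals all_analysis.
From mathcomp Require Import complex.

Set Implicit Arguments.
Unset Strict Implicit.
Unset Printing Implicit Defensive.

Import Order.TTheory GRing.Theory Num.Theory.
Import numFieldNormedType.Exports.
Local Open Scope ring_scope.
Local Open Scope sesquilinear_scope.

Definition cinner (R : rcfType) (N : nat) (u v : 'cV[R[i]]_N) : R[i] :=
  \sum_(l < N) (Num.conj (u l 0)) * v l 0.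

Definition unitary_op (R : rcfType) (N : nat) (A : 'M[R[i]]_N) : Prop :=
  A^t* *m A = 1%:M /\ A *m A^t* = 1%:M.

Definition selfadjmx (R : rcfType) (N : nat) (A : 'M[R[i]]_N) : Prop :=
  A^t* = A.

Definition mx_continuous (R : realType) (m n : nat) (F : R -> 'M[R[i]]_(m, n)) : Prop :=
  forall a b, continuous (fun s : R => complex.Re (F s a b)) /\
              continuous (fun s : R => complex.Im (F s a b)).

Definition mx_has_deriv (R : realType) (m n : nat) (F : R -> 'M[R[i]]_(m, n))
  (t : R) (D : 'M[R[i]]_(m, n)) : Prop :=
  forall a b, is_derive t 1 (fun s : R => complex.Re (F s a b)) (complex.Re (D a b)) /\
              is_derive t 1 (fun s : R => complex.Im (F s a b)) (complex.Im (D a b)).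

Definition orthoprojmx (R : rcfType) (N : nat) (E : 'M[R[i]]_N) : Prop :=
  E *m E = E /\ E^t* = E.

(* Main.v *)
Require Import Defs.
From HB Require Import structures.
From mathcomp Require Import all_boot all_order all_algebra.
From mathcomp Require Import all_classical all_reals all_analysis.
From mathcomp Require Import complex.
From mathcomp Require Import ring.
Import Order.TTheory GRing.Theory Num.Theory.
Import numFieldNormedType.Exports.
Local Open Scope ring_scope.
Local Open Scope sesquilinear_scope.

Section S.
Context {R : realType}.
Definition cder (f : R -> R[i]) (t : R) (z : R[i]) :=
  is_derive t 1 (fun s => complex.Re (f s)) (complex.Re z) /\
  is_derive t 1 (fun s => complex.Im (f s)) (complex.Im z).

Lemma cder_eq f t z z' : cder f t z -> z = z' -> cder f t z'.
Proof. by move=> ? <-. Qed.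

Lemma cder_cst (a : R[i]) t : cder (fun _ => a) t 0.
Proof. split; exact: is_derive_cst. Qed.

Lemma cder_add f g t a b : cder f t a -> cder g t b -> cder (fun s => f s + g s) t (a + b).
Proof.
move=> [fr fi] [gr gi]; split.
- have -> : (fun s => complex.Re (f s + g s)) = (fun s => complex.Re (f s) + complex.Re (g s)).
    by apply/funext => s; case: (f s) => ? ?; case: (g s).
  have h := is_deriveD fr gr.
  have -> : complex.Re (a + b) = complex.Re a + complex.Re b.
    by clear; case: a => ? ?; case: b.
  exact: h.
- have -> : (fun s => complex.Im (f s + g s)) = (fun s => complex.Im (f s) + complex.Im (g s)).
    by apply/funext => s; case: (f s) => ? ?; case: (g s).
  have h := is_deriveD fi gi.
  have -> : complex.Im (a + b) = complex.Im a + complex.Im b.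
    by clear; case: a => ? ?; case: b.
  exact: h.
Qed.

Lemma cder_sum n (f : 'I_n -> R -> R[i]) t (a : 'I_n -> R[i]) :
  (forall l, cder (f l) t (a l)) -> cder (fun s => \sum_(l < n) f l s) t (\sum_(l < n) a l).
Proof.
move=> H; elim: n f a H => [|n IH] f a H.
  under eq_fun do rewrite big_ord0. rewrite big_ord0; exact: cder_cst.
under eq_fun do rewrite big_ord_recr. rewrite big_ord_recr /=.
apply: cder_add; last exact: H.
exact: (IH (fun l => f (widen_ord (leqnSn n) l)) (fun l => a (widen_ord (leqnSn n) l))).
Qed.

Lemma cder_mul f g t a b : cder f t a -> cder g t b -> cder (fun s => f s * g s) t (f t * b + a * g t).
Proof.
move=> [fr fi] [gr gi]; split.
- have -> : (fun s => complex.Re (f s * g s)) =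
     (fun s => complex.Re (f s) * complex.Re (g s) - complex.Im (f s) * complex.Im (g s)).
    by apply/funext => s; case: (f s) => ? ?; case: (g s).
  rewrite (_ : (fun s => _) = (fun s => complex.Re (f s)) * (fun s => complex.Re (g s)) - (fun s => complex.Im (f s)) * (fun s => complex.Im (g s))) //.
  have h := is_deriveB (is_deriveM fr gr) (is_deriveM fi gi).
  refine (is_derive_eq h _).
  clear; by case: (f t) (g t) a b => ? ? [? ?] [? ?] [? ?] /=; rewrite /GRing.scale /=; ring.
- have -> : (fun s => complex.Im (f s * g s)) =
     (fun s => complex.Re (f s) * complex.Im (g s) + complex.Im (f s) * complex.Re (g s)).
    by apply/funext => s; case: (f s) => ? ?; case: (g s).
  rewrite (_ : (fun s => _) = (fun s => complex.Re (f s)) * (fun s => complex.Im (g s)) + (fun s => complex.Im (f s)) * (fun s => complex.Re (g s))) //.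
  have h := is_deriveD (is_deriveM fr gi) (is_deriveM fi gr).
  refine (is_derive_eq h _).
  clear; by case: (f t) (g t) a b => ? ? [? ?] [? ?] [? ?] /=; rewrite /GRing.scale /=; ring.
Qed.

Lemma cder_conj f t a : cder f t a -> cder (fun s => Num.conj (f s)) t (Num.conj a).
Proof.
move=> [fr fi]; split.
- have -> : (fun s => complex.Re (Num.conj (f s))) = (fun s => complex.Re (f s)).
    by apply/funext => s; case: (f s).
  by case: a fr fi.
- have -> : (fun s => complex.Im (Num.conj (f s))) = (fun s => - complex.Im (f s)).
    by apply/funext => s; case: (f s).
  have h := is_deriveN fi.
  have -> : complex.Im (Num.conj a) = - complex.Im a by clear; case: a.
  exact: h.
Qed.

Lemma mxder_cder {m n} (F : R -> 'M[R[i]]_(m, n)) t D :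
  mx_has_deriv F t D <-> forall a b, cder (fun s => F s a b) t (D a b).
Proof. by []. Qed.

Lemma mxder_ext {m n} (F G : R -> 'M[R[i]]_(m, n)) t D D' :
  (forall s, F s = G s) -> D = D' -> mx_has_deriv F t D -> mx_has_deriv G t D'.
Proof. by move=> e <-; rewrite (_ : G = F) //; apply/funext => s; rewrite e. Qed.

Lemma mxder_cst {m n} (A : 'M[R[i]]_(m, n)) t : mx_has_deriv (fun _ => A) t 0.
Proof. move=> a b; rewrite mxE; exact: (cder_cst (A a b) t). Qed.

Lemma mxder_mul {m n p} (F : R -> 'M[R[i]]_(m, n)) (G : R -> 'M[R[i]]_(n, p)) t DF DG :
  mx_has_deriv F t DF -> mx_has_deriv G t DG ->
  mx_has_deriv (fun s => F s *m G s) t (F t *m DG + DF *m G t).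
Proof.
move=> hF hG a b.
change (cder (fun s => (F s *m G s) a b) t ((F t *m DG + DF *m G t) a b)).
have -> : (fun s => (F s *m G s) a b) = (fun s => \sum_l F s a l * G s l b).
  by apply/funext => s; rewrite mxE.
apply: (@cder_eq _ _ (\sum_l (F t a l * DG l b + DF a l * G t l b))).
  by apply: cder_sum => l; apply: cder_mul; [exact: hF | exact: hG].
by rewrite big_split /= !mxE.
Qed.

Lemma mxder_trC {m n} (F : R -> 'M[R[i]]_(m, n)) t D :
  mx_has_deriv F t D -> mx_has_deriv (fun s => (F s)^t*) t (D^t*).
Proof.
move=> hF a b.
change (cder (fun s => ((F s)^t*) a b) t ((D^t*) a b)).
have -> : (fun s => ((F s)^t*) a b) = (fun s => Num.conj (F s b a)).
  by apply/funext => s; rewrite !mxE.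
rewrite !mxE; apply: cder_conj; exact: hF.
Qed.

Lemma mxder_col {m n} (F : R -> 'M[R[i]]_(m, n)) t D k :
  mx_has_deriv F t D -> mx_has_deriv (fun s => col k (F s)) t (col k D).
Proof.
move=> hF a b.
change (cder (fun s => (col k (F s)) a b) t ((col k D) a b)).
have -> : (fun s => (col k (F s)) a b) = (fun s => F s a k).
  by apply/funext => s; rewrite !mxE.
rewrite !mxE; exact: hF.
Qed.

Lemma trmxC_mul {m n p} (A : 'M[R[i]]_(m, n)) (B : 'M[R[i]]_(n, p)) :
  (A *m B)^t* = B^t* *m A^t*.
Proof. by rewrite trmx_mul map_mxM. Qed.

Lemma trmxC_scale {m n} (c : R[i]) (A : 'M[R[i]]_(m, n)) :
  (c *: A)^t* = Num.conj c *: A^t*.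
Proof. by apply/matrixP => a b; rewrite !mxE rmorphM. Qed.

End S.
Arguments mxder_ext {R m n F G t D D'}.
Arguments mxder_cst {R m n} A t.
Arguments mxder_mul {R m n p F G t DF DG}.
Arguments mxder_trC {R m n F t D}.
Arguments mxder_col {R m n F t D} k.

Theorem proposition2p1 (R : realType) (N : nat)
  (H : R -> 'M[R[i]]_N) (U : R -> R -> 'M[R[i]]_N)
  (n : nat) (lambda : 'I_n -> R) (E : 'I_n -> 'M[R[i]]_N) (X0 : 'M[R[i]]_N)
  (j : 'I_n) (d : nat) (psi : 'I_d -> 'cV[R[i]]_N) (V : R -> 'M[R[i]]_d) :
  (* H is a continuous family of self-adjoint operators *)
  mx_continuous H ->
  (forall t, selfadjmx (H t)) ->
  (* U is its propagator *)
  (forall t s, unitary_op (U t s)) ->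
  (forall t, U t t = 1%:M) ->
  (forall t r s, U t r *m U r s = U t s) ->
  (forall t s, exists D, mx_has_deriv (fun tau => U tau s) t D /\
                         (Complex 0 1) *: D = H t *m U t s) ->
  (* X0 = sum_j lambda_j E_j, distinct eigenvalues, spectral projections E_j *)
  injective lambda ->
  (forall l, orthoprojmx (E l)) ->
  (forall l, E l != 0) ->
  (forall l l', l != l' -> E l *m E l' = 0) ->
  \sum_(l < n) E l = 1%:M ->
  X0 = \sum_(l < n) (Complex (lambda l) 0) *: E l ->
  (* periodicity of the spectral projections *)
  (exists T : R, 0 < T /\ forall l, U 0 T *m E l *m U T 0 = E l) ->
  (* d = dim E_j[H] and psi is an orthonormal basis of E_j[H] *)
  d = \rank (E j) ->
  (forall k, E j *m psi k = psi k) ->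
  (forall m k, cinner (psi m) (psi k) = (m == k)%:R) ->
  (* V solves i V' = C_j V, V(0) = I, with C_j(t)_{mk} = <psi_m, H(t) psi_k> *)
  V 0 = 1%:M ->
  (forall t, exists D, mx_has_deriv V t D /\
     (Complex 0 1) *: D =
       (\matrix_(m < d, k < d) cinner (psi m) (H t *m psi k)) *m V t) ->
  (* conclusion, with psi_k(t) = U(0,t) psi_k and
     tilde psi_k(t) = sum_m V(t)_{mk} psi_m(t) *)
  let psit := fun (k : 'I_d) (t : R) => U 0 t *m psi k in
  let tpsi := fun (k : 'I_d) (t : R) => \sum_(m < d) V t m k *: psit m t in
  forall (t : R) (m k : 'I_d),
    exists D, mx_has_deriv (tpsi k) t D /\ cinner (tpsi m t) D = 0.
Proof.
move=> _ Hsa Uu Utt Ucomp Uder _ _ _ _ _ _ _ _ _ Pon _ Vder psit tpsi t m k.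
pose Psi : 'M[R[i]]_(N, d) := \matrix_(l, q) psi q l 0.
have hU0 : forall s, U 0 s = (U s 0)^t*.
  move=> s; have [h1 h2] := Uu s 0.
  by rewrite -[U 0 s]mulmx1 -h2 mulmxA Ucomp Utt mul1mx.
have [D0 [hD0 eD0]] := Uder t 0.
have [DV [hDV eDV]] := Vder t.
pose C := \matrix_(m0 < d, k0 < d) cinner (psi m0) (H t *m psi k0).
pose W := fun s => U 0 s *m Psi *m V s.
pose DW := U 0 t *m Psi *m DV + (D0^t* *m Psi) *m V t.
have hW : mx_has_deriv W t DW.
  have h1 : mx_has_deriv (fun s => U 0 s) t (D0^t*).
    have h0 := mxder_trC hD0. apply: (mxder_ext _ _ h0) => // s; by rewrite hU0.
  have h2 := mxder_mul h1 (mxder_cst Psi t).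
  have h3 := mxder_mul h2 hDV.
  apply: (mxder_ext _ _ h3) => //.
  by rewrite /DW mulmx0 add0r.
have htp : forall q s, tpsi q s = col q (W s).
  move=> q s; apply/matrixP => a b; rewrite /tpsi /psit /W !mxE summxE.
  apply: eq_bigr => l _; rewrite !mxE mulr_sumr mulr_suml.
  by apply: eq_bigr => p _; rewrite !mxE (ord1 b); ring.
have ii : Complex 0 1 * Complex 0 1 = -1 :> R[i] by rewrite -expr2 sqr_i.
have ci : Num.conj (Complex 0 1) = - Complex 0 1 :> R[i].
  by apply/eqP; rewrite eq_complex /= oppr0 !eqxx.
have hUU : (U 0 t)^t* *m U 0 t = 1%:M by rewrite {1}hU0 trmxCK Ucomp Utt.
have hPP : Psi^t* *m Psi = 1%:M.
  apply/matrixP => a b; rewrite !mxE -Pon /cinner; apply: eq_bigr => l _.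
  by rewrite !mxE.
have hC : C = Psi^t* *m (H t *m Psi).
  apply/matrixP => a b; rewrite !mxE /cinner; apply: eq_bigr => l _.
  rewrite !mxE; congr (_ * _).
  by apply: eq_bigr => p _; rewrite !mxE.
have hD0' : D0 = - (Complex 0 1 *: (H t *m U t 0)).
  by rewrite -eD0 scalerA ii scaleN1r opprK.
have hDV' : DV = - (Complex 0 1 *: (C *m V t)).
  by rewrite -eDV scalerA ii scaleN1r opprK.
have hD0s : D0^t* = Complex 0 1 *: (U 0 t *m H t).
  rewrite hD0' (_ : forall (A : 'M[R[i]]_N), (- A)^t* = - A^t*); last first.
    by move=> A; apply/matrixP => a0 b0; rewrite !mxE rmorphN.
  by rewrite trmxC_scale trmxC_mul ci Hsa -(hU0 t) scaleNr opprK.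
exists (@col _ N d k DW); split.
  apply: (mxder_ext _ erefl (mxder_col k hW)) => s; by rewrite htp.
rewrite htp.
have -> : cinner (col m (W t)) (col k DW) = ((W t)^t* *m DW) m k.
  rewrite /cinner !mxE; apply: eq_bigr => l _; by rewrite !mxE.
have cancU : forall p (X : 'M[R[i]]_(p, N)), X *m (U 0 t)^t* *m U 0 t = X.
  by move=> p X; rewrite -mulmxA hUU mulmx1.
have cancP : forall p (X : 'M[R[i]]_(p, d)), X *m Psi^t* *m Psi = X.
  by move=> p X; rewrite -mulmxA hPP mulmx1.
rewrite /W /DW hD0s hDV' hC !trmxC_mul.
rewrite mulmxDr !mulmxN -!scalemxAl -!scalemxAr ?mulmxN -?scalemxAr !mulmxA !cancU !cancP addNr.
by rewrite mxE.
Qed.
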